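(* Let $K$ be a field, $R=\bigoplus_{m\ge0}R_m$ an $\mathbb N$-graded $K$-algebra, and let $A=\sigma(R)\langle x_1,x_2\rangle$ be a connected graded skew PBW extension of $R$. Then $A$ is a connected graded double Ore extension of $R$ (with generating variables $x_1,x_2$).
   Context: All algebras are over a field $K$; a graded algebra $B=\bigoplus_{p\ge0}B_p$ is connected if $B_0=K$. Skew PBW extension: a ring $A$ is a skew PBW extension of $R$ in $x_1,\dots,x_n$, written $A=\sigma(R)\langle x_1,\dots,x_n\rangle$, if (i) $R\subseteq A$; (ii) $A$ is a free left $R$-module with basis the standard monomials $x^\alpha=x_1^{\alpha_1}\cdots x_n^{\alpha_n}$, $\alpha\in\mathbb N^n$; (iii) for each $i$ and $r\in R\setminus\{0\}$ there is $c_{i,r}\in R\setminus\{0\}$ with $x_ir-c_{i,r}x_i\in R$; (iv) for all $i,j$ there is $c_{i,j}\in R\setminus\{0\}$ with $x_jx_i-c_{i,j}x_ix_j\in R+Rx_1+\cdots+Rx_n$. Then for each $i$ there are an injective ring endomorphism $\sigma_i$ of $R$ and a $\sigma_i$-derivation $\delta_i$ with $x_ir=\sigma_i(r)x_i+\delta_i(r)$. $A$ is bijective if every $\sigma_i$ is bijective and every $c_{i,j}$ ($i<j$) is invertible. A graded skew PBW extension is a bijective skew PBW extension of an $\mathbb N$-graded algebra $R$ such that each $\sigma_i$ is a graded homomorphism, each $\delta_i$ satisfies $\delta_i(R_m)\subseteq R_{m+1}$, and $x_jx_i-c_{i,j}x_ix_j\in R_2+R_1x_1+\cdots+R_1x_n$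 with $c_{i,j}\in R_0$; it is graded by $A_p=\mathrm{span}_K\{r_tx^\alpha: t+|\alpha|=p,\ r_t\in R_t\}$. Double Ore extensions: a $K$-algebra $B\supseteq R$ is a right double Ore extension of $R$ if (1) $B$ is generated by $R$ and $x_1,x_2$; (2) $x_2x_1=p_{12}x_1x_2+p_{11}x_1^2+\tau_1x_1+\tau_2x_2+\tau_0$ with $p_{12},p_{11}\in K$, $\tau_i\in R$; (3) $B$ is a free left $R$-module with basis $\{x_1^ax_2^b\}_{a,b\ge0}$; (4) $x_1R+x_2R\subseteq Rx_1+Rx_2+R$. It is a left double Ore extension if (1) holds, $x_1x_2=p'_{12}x_2x_1+p'_{11}x_1^2+x_1\tau'_1+x_2\tau'_2+\tau'_0$ with $p'_{12},p'_{11}\in K$, $\tau'_i\in R$, $B$ is a free right $R$-module with basis $\{x_1^ax_2^b\}$, and $x_1R+x_2R\subseteq Rx_1+Rx_2+R$. It is a double Ore extension if it is both a left and a right double Ore extension with the same generators $x_1,x_2$. It is graded if all its relations are homogeneous with $\deg x_1=\deg x_2=1$ (with $R$ graded). *)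

(* Defs.v *)
From HB Require Import structures.
From mathcomp Require Import all_boot all_order all_algebra.
Set Implicit Arguments. Unset Strict Implicit. Unset Printing Implicit Defensive.
Import GRing.Theory.
Local Open Scope ring_scope.

Section Defs.
Variables (K : fieldType) (A : algType K).

Definition subalg (S : A -> Prop) : Prop :=
  [/\ S 1,
      (forall (k : K) u v, S u -> S v -> S (k *: u + v)) &
      (forall u v, S u -> S v -> S (u * v))].

(* S = \bigoplus_{p >= 0} G p as an N-graded K-algebra (G p are K-subspaces
   of S, G p * G q <= G (p+q), and the sum of the G p is direct and equals S). *)
Definition graded_by (S : A -> Prop) (G : nat -> A -> Prop) : Prop :=
  (forall m a, G m a -> S a) /\
  (forall m, G m 0) /\
  (forall m (k : K) u v, G m u -> G m v -> G m (k *: u + v)) /\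
  (forall p q u v, G p u -> G q v -> G (p + q)%N (u * v)) /\
      (forall s, S s -> exists (N : nat) (f : nat -> A),
          (forall p, G p (f p)) /\ s = \sum_(p < N) f p) /\
      (forall (N : nat) (f : nat -> A), (forall p, G p (f p)) ->
          \sum_(p < N) f p = 0 -> forall p, (p < N)%N -> f p = 0).

Definition mono (x1 x2 : A) (a b : nat) : A := x1 ^+ a * x2 ^+ b.

Definition left_basis (R : A -> Prop) (x1 x2 : A) : Prop :=
  (forall s : A, exists (N : nat) (r : nat -> nat -> A),
      (forall i j, R (r i j)) /\
      s = \sum_(i < N) \sum_(j < N) r i j * mono x1 x2 i j) /\
  (forall (N : nat) (r : nat -> nat -> A), (forall i j, R (r i j)) ->
      \sum_(i < N) \sum_(j < N) r i j * mono x1 x2 i j = 0 ->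
      forall i j, (i < N)%N -> (j < N)%N -> r i j = 0).

Definition right_basis (R : A -> Prop) (x1 x2 : A) : Prop :=
  (forall s : A, exists (N : nat) (r : nat -> nat -> A),
      (forall i j, R (r i j)) /\
      s = \sum_(i < N) \sum_(j < N) mono x1 x2 i j * r i j) /\
  (forall (N : nat) (r : nat -> nat -> A), (forall i j, R (r i j)) ->
      \sum_(i < N) \sum_(j < N) mono x1 x2 i j * r i j = 0 ->
      forall i j, (i < N)%N -> (j < N)%N -> r i j = 0).

Definition xv (x1 x2 : A) (i : 'I_2) : A := if val i == 0%N then x1 else x2.

(* The degree-p piece of a skew PBW extension in x1, x2:
   A_p = span_K { r_t x^alpha : t + |alpha| = p, r_t \in R_t }.  Since each
   R_t is a K-subspace this span is the set of sums below. *)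
Definition pbw_piece (GR : nat -> A -> Prop) (x1 x2 : A) (p : nat) (a : A) : Prop :=
  exists r : nat -> nat -> A,
    (forall i j, (i + j <= p)%N -> GR (p - (i + j))%N (r i j)) /\
    a = \sum_(i < p.+1) \sum_(j < p.+1 | (i + j <= p)%N) r i j * mono x1 x2 i j.

Definition in_R2R1x (GR : nat -> A -> Prop) (x1 x2 : A) (a : A) : Prop :=
  exists t0 t1 t2, [/\ GR 2%N t0, GR 1%N t1, GR 1%N t2 & a = t0 + t1 * x1 + t2 * x2].

Definition connected_graded_skew_PBW2 (R : A -> Prop) (GR : nat -> A -> Prop)
    (x1 x2 : A) : Prop :=
  [/\
      subalg R /\ graded_by R GR,
      left_basis R x1 x2,
      (forall (i : 'I_2) r, R r -> r <> 0 ->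
          exists c, [/\ R c, c <> 0 & R (xv x1 x2 i * r - c * xv x1 x2 i)]) /\
      (* (iv), with c_{i,j} \in R_0, invertible for i < j (bijectivity),
         and x_j x_i - c_{i,j} x_i x_j \in R_2 + R_1 x_1 + R_1 x_2 (graded) *)
      (forall i j : 'I_2, exists c, [/\ GR 0%N c, c <> 0,
          ((i < j)%N -> exists d, [/\ R d, c * d = 1 & d * c = 1]) &
          in_R2R1x GR x1 x2 (xv x1 x2 j * xv x1 x2 i - c * xv x1 x2 i * xv x1 x2 j)]),
      (exists (sigma delta : 'I_2 -> A -> A),
          [/\ (forall i r, R r -> [/\ R (sigma i r), R (delta i r) &
                  xv x1 x2 i * r = sigma i r * xv x1 x2 i + delta i r]),
              (forall i r s, R r -> R s -> sigma i r = sigma i s -> r = s),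
              (forall i s, R s -> exists r, R r /\ sigma i r = s) &
              (forall i m r, GR m r -> GR m (sigma i r) /\ GR m.+1 (delta i r))]) &
      graded_by (fun _ => True) (pbw_piece GR x1 x2) /\
      (forall a, pbw_piece GR x1 x2 0 a <-> exists k : K, a = k%:A)].

Definition connected_graded_double_Ore (R : A -> Prop) (GR : nat -> A -> Prop)
    (x1 x2 : A) : Prop :=
  [/\
      [/\ graded_by (fun _ => True) (pbw_piece GR x1 x2),
          (forall a, pbw_piece GR x1 x2 0 a <-> exists k : K, a = k%:A),
          pbw_piece GR x1 x2 1 x1, pbw_piece GR x1 x2 1 x2 &
          (forall m r, GR m r -> pbw_piece GR x1 x2 m r)],
      (forall S, subalg S -> (forall r, R r -> S r) -> S x1 -> S x2 -> forall a, S a),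
      [/\ (exists (p12 p11 : K) t0 t1 t2, [/\ GR 2%N t0, GR 1%N t1, GR 1%N t2 &
             x2 * x1 = p12 *: (x1 * x2) + p11 *: (x1 ^+ 2) + t1 * x1 + t2 * x2 + t0]),
          left_basis R x1 x2 &
          (forall r s, R r -> R s -> exists a b c,
             [/\ R a, R b, R c & x1 * r + x2 * s = a * x1 + b * x2 + c])],
      [/\ (exists (p12 p11 : K) t0 t1 t2, [/\ GR 2%N t0, GR 1%N t1, GR 1%N t2 &
             x1 * x2 = p12 *: (x2 * x1) + p11 *: (x1 ^+ 2) + x1 * t1 + x2 * t2 + t0]),
          right_basis R x1 x2 &
          (forall r s, R r -> R s -> exists a b c,
             [/\ R a, R b, R c & x1 * r + x2 * s = a * x1 + b * x2 + c])] &
      (forall (i : 'I_2) m r, GR m r -> exists a b c,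
          [/\ GR m a, GR m b, GR m.+1 c & xv x1 x2 i * r = a * x1 + b * x2 + c])].

End Defs.

(* Main.v *)
Require Import Defs.
From HB Require Import structures.
From mathcomp Require Import all_boot all_order all_algebra.
From Stdlib Require Import ClassicalEpsilon.
Set Implicit Arguments. Unset Strict Implicit. Unset Printing Implicit Defensive.
Import GRing.Theory.
Local Open Scope ring_scope.

Section Closure.
Variables (K : fieldType) (A : algType K) (R : A -> Prop).
Hypothesis HR : subalg R.

Lemma R1 : R 1. Proof. by case: HR. Qed.
Lemma R0 : R 0.
Proof. case: HR => h1 h2 _; have := h2 (-1) 1 1 h1 h1. by rewrite scaleN1r addNr. Qed.
Lemma RD u v : R u -> R v -> R (u + v).
Proof. case: HR => _ h2 _ hu hv; have := h2 1 u v hu hv. by rewrite scale1r. Qed.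
Lemma RZ k u : R u -> R (k *: u).
Proof. case: HR => _ h2 _ hu; have := h2 k u 0 hu R0. by rewrite addr0. Qed.
Lemma RN u : R u -> R (- u).
Proof. move=> hu; rewrite -scaleN1r; exact: RZ. Qed.
Lemma RB u v : R u -> R v -> R (u - v).
Proof. by move=> hu hv; apply: RD => //; apply: RN. Qed.
Lemma RM u v : R u -> R v -> R (u * v).
Proof. by case: HR => _ _ h3; apply: h3. Qed.
Lemma RX u n : R u -> R (u ^+ n).
Proof. move=> hu; elim: n => [|n IH]; first by rewrite expr0; apply: R1. by rewrite exprS; apply: RM. Qed.
Lemma Rsum (I : Type) (r : seq I) (P : pred I) (F : I -> A) :
  (forall i, P i -> R (F i)) -> R (\sum_(i <- r | P i) F i).
Proof. move=> h; apply: (big_ind R) => //; [exact: R0 | exact: RD]. Qed.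
End Closure.

Section GClosure.
Variables (K : fieldType) (A : algType K) (S : A -> Prop) (G : nat -> A -> Prop).
Hypothesis HG : graded_by S G.
Lemma G0 m : G m 0. Proof. by case: HG => _ [h _]. Qed.
Lemma GS m a : G m a -> S a. Proof. by case: HG => h _; apply: h. Qed.
Lemma GD m u v : G m u -> G m v -> G m (u + v).
Proof. case: HG => _ [_ [h _]] hu hv; have := h m 1 u v hu hv. by rewrite scale1r. Qed.
Lemma GZ m k u : G m u -> G m (k *: u).
Proof. case: HG => _ [_ [h _]] hu; have := h m k u 0 hu (G0 m). by rewrite addr0. Qed.
Lemma GN m u : G m u -> G m (- u).
Proof. move=> hu; rewrite -scaleN1r; exact: GZ. Qed.
Lemma GB m u v : G m u -> G m v -> G m (u - v).
Proof. by move=> hu hv; apply: GD => //; apply: GN. Qed.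
Lemma GM p q u v : G p u -> G q v -> G (p + q)%N (u * v).
Proof. by case: HG => _ [_ [_ [h _]]]; apply: h. Qed.
Lemma Gsum m (I : Type) (r : seq I) (P : pred I) (F : I -> A) :
  (forall i, P i -> G m (F i)) -> G m (\sum_(i <- r | P i) F i).
Proof. move=> h; apply: (big_ind (G m)) => //; [exact: G0 | exact: GD]. Qed.
End GClosure.

Lemma zid (V : zmodType) (X t p d q e : V) : X = X + t + (p - d) + (q - e) - p - q + (- t - - d - - e).
Proof.
rewrite !opprK !addrA.
rewrite (addrAC _ p) (addrAC _ p) (addrAC _ p) addrK.
rewrite (addrAC _ q) addrK.
rewrite (addrAC _ t) (addrAC _ t) addrK.
by rewrite (addrAC _ (- d)) !subrK.
Qed.

Lemma lin_id (K : fieldType) (V : lmodType K) (k : K) (X Y Z T P D Q E : V) : k != 0 ->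
  Y = k *: X + T + (P - D) + (Q - E) ->
  X = k^-1 *: Y + 0 *: Z + (- k^-1) *: P + (- k^-1) *: Q + (- k^-1) *: (T - D - E).
Proof.
move=> hk ->; rewrite !scalerDr !scalerN scalerA mulVf // scale1r scale0r addr0 !scaleNr.
exact: zid.
Qed.

Lemma sum_delta2' (K : fieldType) (A : algType K) (F : nat -> nat -> A) N a b : (a < N)%N -> (b < N)%N ->
  \sum_(i < N) \sum_(j < N) (if (i == a :> nat) && (j == b :> nat) then F i j else 0) = F a b.
Proof.
move=> ha hb.
transitivity (\sum_(i < N) if (i == a :> nat) then F a b else 0).
  apply: eq_bigr => i _; case: eqP => [->|_]; last by rewrite big1.
  transitivity (\sum_(j < N) if (j == b :> nat) then F a b else 0).
    by apply: eq_bigr => j _ /=; case: eqP => [->|_].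
  by rewrite -big_mkcond (big_ord1_eq _ (fun _ : nat => F a b) b N) hb.
by rewrite -big_mkcond (big_ord1_eq _ (fun _ : nat => F a b) a N) ha.
Qed.

Section Piece.
Variables (K : fieldType) (A : algType K) (R : A -> Prop) (GR : nat -> A -> Prop) (x1 x2 : A).
Hypothesis HG : graded_by R GR.

Lemma piece_delta m a b r : (a + b <= m)%N -> GR (m - (a + b))%N r ->
  pbw_piece GR x1 x2 m (r * mono x1 x2 a b).
Proof.
move=> hab hr; exists (fun i j => if (i == a) && (j == b) then r else 0); split.
  move=> i j _; case: ifP => [/andP [/eqP -> /eqP ->] //|_]; exact (G0 HG _).
have ha : (a < m.+1)%N by rewrite ltnS (leq_trans (leq_addr b a) hab).
have hb : (b < m.+1)%N by rewrite ltnS (leq_trans (leq_addl a b) hab).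
rewrite -(sum_delta2' (fun _ _ => r * mono x1 x2 a b) ha hb).
apply: eq_bigr => i _; rewrite [in RHS]big_mkcond; apply: eq_bigr => j _.
case: ifP => [/andP [/eqP -> /eqP ->]|_]; first by rewrite hab.
by case: ifP => _; rewrite ?mul0r.
Qed.
End Piece.
Section Main.
Variables (K : fieldType) (A : algType K) (R : A -> Prop) (GR : nat -> A -> Prop)
  (x1 x2 : A) (sigma delta : 'I_2 -> A -> A).
Hypotheses (HR : subalg R) (HG : graded_by R GR) (HL : left_basis R x1 x2)
 (Hsd : forall i r, R r -> [/\ R (sigma i r), R (delta i r) &
                 xv x1 x2 i * r = sigma i r * xv x1 x2 i + delta i r])
 (Hinj : forall i r s, R r -> R s -> sigma i r = sigma i s -> r = s)
 (Hsurj : forall i s, R s -> exists r, R r /\ sigma i r = s)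
 (Hgrd : forall i m r, GR m r -> GR m (sigma i r) /\ GR m.+1 (delta i r)).

Local Notation mono := (mono x1 x2).
Definition LS N (f : nat -> nat -> A) := \sum_(i < N) \sum_(j < N) f i j * mono i j.
Definition pad N (f : nat -> nat -> A) i j := if (i < N)%N && (j < N)%N then f i j else 0.
Definition Rv (f : nat -> nat -> A) := forall i j, R (f i j).

Lemma Rv_pad N f : Rv f -> Rv (pad N f).
Proof. move=> h i j; rewrite /pad; case: ifP => _; [exact: h | exact: R0]. Qed.

Lemma LS_pad N M f : (N <= M)%N -> LS N f = LS M (pad N f).
Proof.
move=> NM; rewrite /LS (big_ord_widen M (fun i => \sum_(j < N) f i j * mono i j) NM).
rewrite big_mkcond; apply: eq_bigr => i _.
case: ifP => hi.
  rewrite (big_ord_widen M (fun j => f i j * mono i j) NM) big_mkcond; apply: eq_bigr => j _.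
  by rewrite /pad hi; case: ifP => //= _; rewrite mul0r.
by rewrite big1 // => j _; rewrite /pad hi mul0r.
Qed.

Lemma LS_add N f g : LS N f + LS N g = LS N (fun i j => f i j + g i j).
Proof.
rewrite /LS -big_split; apply: eq_bigr => i _; rewrite -big_split.
by apply: eq_bigr => j _; rewrite mulrDl.
Qed.

Lemma LS_sub N f g : LS N f - LS N g = LS N (fun i j => f i j - g i j).
Proof.
rewrite /LS -sumrB; apply: eq_bigr => i _; rewrite -sumrB.
by apply: eq_bigr => j _; rewrite mulrBl.
Qed.

Lemma LS_uniq N f g : Rv f -> Rv g -> LS N f = LS N g ->
  forall i j, (i < N)%N -> (j < N)%N -> f i j = g i j.
Proof.
move=> hf hg e i j hi hj; apply/eqP; rewrite -subr_eq0; apply/eqP.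
case: HL => _ h; apply: (h N (fun i j => f i j - g i j)) => //.
  by move=> a b; apply: RB.
by have := LS_sub N f g; rewrite e subrr /LS => <-.
Qed.

Lemma coef_ex s : exists p : nat * (nat -> nat -> A), Rv p.2 /\ s = LS p.1 p.2.
Proof. case: HL => [h _]; case: (h s) => N [r [hr e]]; by exists (N, r). Qed.

Definition coefp s := proj1_sig (constructive_indefinite_description _ (coef_ex s)).
Definition coef s := pad (coefp s).1 (coefp s).2.

Lemma coef_spec s : [/\ Rv (coef s), s = LS (coefp s).1 (coef s) &
   forall i j, ~~ ((i < (coefp s).1)%N && (j < (coefp s).1)%N) -> coef s i j = 0].
Proof.
rewrite /coef /coefp; case: constructive_indefinite_description => [[N c] [hc e]] /=.
split; first exact: Rv_pad.
  by rewrite -LS_pad.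
by move=> i j h; rewrite /pad (negbTE h).
Qed.

Lemma coef_LS N f s : Rv f -> s = LS N f -> forall i j, coef s i j = pad N f i j.
Proof.
move=> hf e i j; case: (coef_spec s) => hc es hz.
set N' := (coefp s).1 in es hz.
have e2 : LS (maxn N N') (pad N f) = LS (maxn N N') (coef s).
  rewrite -LS_pad ?leq_maxl // -e {1}es (LS_pad _ (leq_maxr N N')).
  rewrite /LS; apply: eq_bigr => a _; apply: eq_bigr => b _; rewrite /pad.
  by case: ifP => // /negbT /hz ->.
case: (boolP ((i < maxn N N')%N && (j < maxn N N')%N)) => [/andP [hi hj]|hh].
  by rewrite (LS_uniq (Rv_pad N hf) hc e2 hi hj).
rewrite hz ?/pad.
  case: ifP => // /andP [hi hj]; case/negP: hh.
  by rewrite (leq_trans hi (leq_maxl _ _)) (leq_trans hj (leq_maxl _ _)).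
apply: contra hh => /andP [hi hj].
by rewrite (leq_trans hi (leq_maxr _ _)) (leq_trans hj (leq_maxr _ _)).
Qed.

Lemma coef0 i j : coef 0 i j = 0.
Proof.
rewrite (coef_LS (N:=0) (f:=fun _ _ => 0)) //; first by move=> *; apply: R0.
by rewrite /LS big_ord0.
Qed.

Lemma coef_add s t i j : coef (s + t) i j = coef s i j + coef t i j.
Proof.
case: (coef_spec s) => hs es zs; case: (coef_spec t) => ht et zt.
set M := maxn (coefp s).1 (coefp t).1.
have es' : s = LS M (coef s).
  rewrite {1}es (LS_pad _ (leq_maxl (coefp s).1 (coefp t).1)) /LS; apply: eq_bigr => a _; apply: eq_bigr => b _.
  by rewrite /pad; case: ifP => // /negbT /zs ->.
have et' : t = LS M (coef t).
  rewrite {1}et (LS_pad _ (leq_maxr (coefp s).1 (coefp t).1)) /LS; apply: eq_bigr => a _; apply: eq_bigr => b _.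
  by rewrite /pad; case: ifP => // /negbT /zt ->.
have e : s + t = LS M (fun a b => coef s a b + coef t a b) by rewrite {1}es' {1}et' LS_add.
rewrite (coef_LS _ e); last by move=> a b; apply: RD.
rewrite /pad; case: ifP => // h.
rewrite zs ?zt ?addr0 //; apply: contraFN h => /andP [hi hj].
  by rewrite (leq_trans hi (leq_maxr _ _)) (leq_trans hj (leq_maxr _ _)).
by rewrite (leq_trans hi (leq_maxl _ _)) (leq_trans hj (leq_maxl _ _)).
Qed.

Lemma coef_sum (I : Type) (r : seq I) (P : pred I) (F : I -> A) i j :
  coef (\sum_(k <- r | P k) F k) i j = \sum_(k <- r | P k) coef (F k) i j.
Proof.
apply: (big_morph (fun s => coef s i j)) => [s t|]; [exact: coef_add | exact: coef0].
Qed.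

Lemma LS_delta N a b r : (a < N)%N -> (b < N)%N ->
  LS N (fun i j => if (i == a) && (j == b) then r else 0) = r * mono a b.
Proof.
move=> ha hb; rewrite /LS.
transitivity (\sum_(i < N) if (i == a :> nat) then r * mono a b else 0).
  apply: eq_bigr => i _; case: eqP => [->|_]; last by rewrite big1 // => j _; rewrite mul0r.
  transitivity (\sum_(j < N) if (j == b :> nat) then r * mono a b else 0).
    by apply: eq_bigr => j _ /=; case: eqP => [->|_]; rewrite ?mul0r.
  by rewrite -big_mkcond (big_ord1_eq _ (fun _ : nat => r * mono a b) b N) hb.
by rewrite -big_mkcond (big_ord1_eq _ (fun _ : nat => r * mono a b) a N) ha.
Qed.

Lemma coef_term r a b i j : R r ->
  coef (r * mono a b) i j = if (i == a) && (j == b) then r else 0.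
Proof.
move=> hr; have ha : (a < (maxn a b).+1)%N by rewrite ltnS leq_maxl.
have hb : (b < (maxn a b).+1)%N by rewrite ltnS leq_maxr.
rewrite (coef_LS _ (esym (LS_delta r ha hb))); last first.
  by move=> c d; case: ifP => _ //; apply: R0.
rewrite /pad; case: ifP => //; case: ifP => // /andP [/eqP -> /eqP ->].
by rewrite ha hb.
Qed.


Local Notation s0 := (sigma ord0).
Local Notation d0 := (delta ord0).
Local Notation s1 := (sigma ord_max).
Local Notation d1 := (delta ord_max).

Lemma x1r r : R r -> x1 * r = s0 r * x1 + d0 r.
Proof. by case/(Hsd ord0). Qed.
Lemma x2r r : R r -> x2 * r = s1 r * x2 + d1 r.
Proof. by case/(Hsd ord_max). Qed.

Lemma mono_x1 r i j : R r -> x1 * (r * mono i j) = s0 r * mono i.+1 j + d0 r * mono i j.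
Proof. by move=> hr; rewrite /Defs.mono mulrA x1r // mulrDl -mulrA (mulrA x1) -exprS mulrA. Qed.

Lemma mono_x2 r j : R r -> x2 * (r * mono 0 j) = s1 r * mono 0 j.+1 + d1 r * mono 0 j.
Proof. by move=> hr; rewrite /Defs.mono !expr0 !mul1r mulrA x2r // mulrDl -mulrA -exprS. Qed.

Definition term := (A * (nat * nat))%type.
Definition val (l : seq term) := \sum_(t <- l) t.1 * mono t.2.1 t.2.2.

Lemma val_cons t l : val (t :: l) = t.1 * mono t.2.1 t.2.2 + val l.
Proof. by rewrite /val big_cons. Qed.
Lemma val_nil : val [::] = 0.
Proof. by rewrite /val big_nil. Qed.

Lemma mulx1_list d l : (forall t, t \in l -> R t.1 /\ (t.2.1 + t.2.2 < d)%N) ->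
  exists l', (forall t, t \in l' -> R t.1 /\ (t.2.1 + t.2.2 < d.+1)%N) /\ x1 * val l = val l'.
Proof.
elim: l => [|t l IH] h.
  by exists [::]; split => //; rewrite val_nil mulr0.
have [ht hd] := h t (mem_head _ _).
have [l' [h' e]] : exists l', (forall t, t \in l' -> R t.1 /\ (t.2.1 + t.2.2 < d.+1)%N) /\ x1 * val l = val l'.
  by apply: IH => u hu; apply: h; rewrite in_cons hu orbT.
exists ((s0 t.1, (t.2.1.+1, t.2.2)) :: (d0 t.1, t.2) :: l'); split.
  move=> u; rewrite !in_cons => /orP [/eqP -> /=|/orP [/eqP -> /=|/h' //]].
    by split; [case: (Hsd ord0 ht) | rewrite addSn ltnS].
  by split; [case: (Hsd ord0 ht) | apply: ltnW].
by rewrite val_cons mulrDr mono_x1 // e !val_cons addrA.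
Qed.

Lemma mulx2_list d l : (forall t, t \in l -> [/\ R t.1, t.2.1 = 0%N & (t.2.2 < d)%N]) ->
  exists l', (forall t, t \in l' -> [/\ R t.1, t.2.1 = 0%N & (t.2.2 < d.+1)%N]) /\ x2 * val l = val l'.
Proof.
elim: l => [|t l IH] h.
  by exists [::]; split => //; rewrite val_nil mulr0.
have [ht h0 hd] := h t (mem_head _ _).
have [l' [h' e]] : exists l', (forall t, t \in l' -> [/\ R t.1, t.2.1 = 0%N & (t.2.2 < d.+1)%N]) /\ x2 * val l = val l'.
  by apply: IH => u hu; apply: h; rewrite in_cons hu orbT.
exists ((s1 t.1, (0%N, t.2.2.+1)) :: (d1 t.1, (0%N, t.2.2)) :: l'); split.
  move=> u; rewrite !in_cons => /orP [/eqP -> /=|/orP [/eqP -> /=|/h' //]].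
    by split => //; case: (Hsd ord_max ht).
  by split => //; [case: (Hsd ord_max ht) | apply: ltnW].
by rewrite val_cons h0 mulrDr mono_x2 // e !val_cons addrA.
Qed.

Lemma Riter i n r : R r -> R (iter n (sigma i) r).
Proof. move=> hr; elim: n => //= n IH; by case: (Hsd i IH). Qed.

Lemma E2 b r : R r -> exists l, (forall t, t \in l -> [/\ R t.1, t.2.1 = 0%N & (t.2.2 < b)%N]) /\
  x2 ^+ b * r = iter b s1 r * mono 0 b + val l.
Proof.
move=> hr; elim: b => [|b [l [hl e]]].
  by exists [::]; split => //; rewrite val_nil addr0 /Defs.mono !expr0 !mul1r mulr1.
have [l' [hl' e']] := mulx2_list hl.
exists ((d1 (iter b s1 r), (0%N, b)) :: l'); split.
  move=> u; rewrite in_cons => /orP [/eqP -> /=|/hl' //].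
  by split => //; case: (Hsd ord_max (Riter ord_max b hr)).
by rewrite exprS -mulrA e mulrDr (mono_x2 b (Riter ord_max b hr)) e' val_cons addrA.
Qed.

Lemma E a b r : R r -> exists l, (forall t, t \in l -> R t.1 /\ (t.2.1 + t.2.2 < a + b)%N) /\
  mono a b * r = iter a s0 (iter b s1 r) * mono a b + val l.
Proof.
move=> hr; elim: a => [|a [l [hl e]]].
  have [l [hl e]] := E2 b hr; exists l; split.
    by move=> t /hl [? -> ?]; split; rewrite ?add0n.
  have -> : mono 0 b * r = x2 ^+ b * r by rewrite /Defs.mono expr0 mul1r.
  by rewrite e.
have [l' [hl' e']] := mulx1_list hl.
exists ((d0 (iter a s0 (iter b s1 r)), (a, b)) :: l'); split.
  move=> u; rewrite in_cons => /orP [/eqP -> /=|/hl' //].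
  by split => //; case: (Hsd ord0 (Riter ord0 a (Riter ord_max b hr))).
have -> : mono a.+1 b * r = x1 * (mono a b * r) by rewrite /Defs.mono exprS !mulrA.
by rewrite e mulrDr (mono_x1 a b (Riter ord0 a (Riter ord_max b hr))) e' val_cons addrA.
Qed.

Lemma coef_val l i j : (forall t, t \in l -> R t.1) ->
  coef (val l) i j = \sum_(t <- l) (if (i == t.2.1) && (j == t.2.2) then t.1 else 0).
Proof.
elim: l => [|t l IH] h; first by rewrite val_nil coef0 big_nil.
rewrite val_cons coef_add coef_term ?big_cons ?IH //; last exact: h (mem_head _ _).
by move=> u hu; apply: h; rewrite in_cons hu orbT.
Qed.

Lemma coef_E a b r i j : R r -> (a + b <= i + j)%N ->
  coef (mono a b * r) i j = if (i == a) && (j == b) then iter a s0 (iter b s1 r) else 0.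
Proof.
move=> hr hab; have [l [hl e]] := E a b hr.
rewrite e coef_add (coef_term a b i j (Riter ord0 a (Riter ord_max b hr))) coef_val; last by move=> t /hl [].
rewrite big1_seq ?addr0 // => t /andP [_ /hl [_ ht]].
case: ifP => // /andP [/eqP hi /eqP hj]; move: ht; rewrite -hi -hj.
by rewrite ltnNge hab.
Qed.


Lemma xv_mono i : exists a b, xv x1 x2 i = mono a b /\ ~~ ((a == 0%N) && (b == 0%N)).
Proof.
case: i => [[|[|n]] hi] //.
  by exists 1%N, 0%N; split => //; rewrite /xv /Defs.mono /= expr1 expr0 mulr1.
by exists 0%N, 1%N; split => //; rewrite /xv /Defs.mono /= expr1 expr0 mul1r.
Qed.

Lemma sig_coef i u a b : xv x1 x2 i = mono a b -> ~~ ((a == 0%N) && (b == 0%N)) -> R u ->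
  coef (xv x1 x2 i * u) a b = sigma i u /\ coef (xv x1 x2 i * u) 0 0 = delta i u.
Proof.
move=> ex nab hu; case: (Hsd i hu) => hs hd e.
have -> : xv x1 x2 i * u = sigma i u * mono a b + delta i u * mono 0 0.
  by rewrite e ex /Defs.mono !expr0 !mulr1.
rewrite !coef_add !coef_term // !eqxx /=; clear ex; move: nab.
by case: a => [|a] //=; case: b => [|b] //= _; rewrite ?addr0 ?add0r.
Qed.

Lemma sig0 i : sigma i 0 = 0.
Proof.
have [a [b [ex nab]]] := xv_mono i.
have [<- _] := sig_coef ex nab (R0 HR).
by rewrite mulr0 coef0.
Qed.

Lemma sigD i u v : R u -> R v -> sigma i (u + v) = sigma i u + sigma i v.
Proof.
move=> hu hv; have [a [b [ex nab]]] := xv_mono i.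
have [<- _] := sig_coef ex nab (RD HR hu hv).
have [<- _] := sig_coef ex nab hu.
have [<- _] := sig_coef ex nab hv.
by rewrite mulrDr coef_add.
Qed.

Lemma iter_inj i n u : R u -> iter n (sigma i) u = 0 -> u = 0.
Proof.
move=> hu; elim: n => //= n IH e; apply: IH.
by apply: (Hinj (Riter i n hu) (R0 HR)); rewrite sig0; exact: e.
Qed.

Lemma sum_delta2 (F : nat -> nat -> A) N a b : (a < N)%N -> (b < N)%N ->
  \sum_(i < N) \sum_(j < N) (if (i == a :> nat) && (j == b :> nat) then F i j else 0) = F a b.
Proof.
move=> ha hb.
transitivity (\sum_(i < N) if (i == a :> nat) then F a b else 0).
  apply: eq_bigr => i _; case: eqP => [->|_]; last by rewrite big1.
  transitivity (\sum_(j < N) if (j == b :> nat) then F a b else 0).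
    by apply: eq_bigr => j _ /=; case: eqP => [->|_].
  by rewrite -big_mkcond (big_ord1_eq _ (fun _ : nat => F a b) b N) hb.
by rewrite -big_mkcond (big_ord1_eq _ (fun _ : nat => F a b) a N) ha.
Qed.

Definition RS N (f : nat -> nat -> A) := \sum_(i < N) \sum_(j < N) mono i j * f i j.

Lemma right_uniq N r : Rv r -> RS N r = 0 -> forall i j, (i < N)%N -> (j < N)%N -> r i j = 0.
Proof.
move=> hr e.
suff key : forall k i j, (i < N)%N -> (j < N)%N -> (N + N <= i + j + k)%N -> r i j = 0.
  by move=> i j hi hj; apply: (key (N + N)%N) => //; rewrite leq_addl.
elim=> [|k IH] i j hi hj hk.
  by move: hk; rewrite addn0 => /(leq_trans (leq_add hi hj)); rewrite addSn addnS ltnNge leqnSn.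
case: (leqP (N + N) (i + j + k)) => hk'; first exact: IH.
have hD : (i + j + k.+1 = N + N)%N by apply/eqP; rewrite eqn_leq hk addnS hk'.
have h0 : coef (RS N r) i j = 0 by rewrite e coef0.
rewrite /RS coef_sum in h0.
have h1 : forall i' j' : 'I_N, coef (mono i' j' * r i' j') i j =
   if (i' == i :> nat) && (j' == j :> nat) then iter i' s0 (iter j' s1 (r i' j')) else 0.
  move=> i' j'; case: (leqP (i' + j') (i + j)) => hle.
    rewrite coef_E //; congr (if _ then _ else _).
    by rewrite [i == _]eq_sym [j == _]eq_sym.
  rewrite (IH i' j') ?ltn_ord //; last first.
    by rewrite -hD addnS -addSn leq_add2r.
  rewrite mulr0 coef0; case: ifP => // /andP [/eqP hi' /eqP hj'].
  by move: hle; rewrite hi' hj' ltnn.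
have h2 : \sum_(i' < N) coef (\sum_(j' < N) mono i' j' * r i' j') i j =
    iter i s0 (iter j s1 (r i j)).
  rewrite -(sum_delta2 (fun a b => iter a s0 (iter b s1 (r a b))) hi hj).
  by apply: eq_bigr => i' _; rewrite coef_sum; apply: eq_bigr => j' _; exact: h1.
rewrite h2 in h0.
apply: (iter_inj (hr i j) (n := j) (i := ord_max)).
exact: (iter_inj (Riter ord_max j (hr i j)) h0).
Qed.


Definition rval (l : seq term) := \sum_(t <- l) mono t.2.1 t.2.2 * t.1.
Definition Mset s := exists l : seq term, (forall t, t \in l -> R t.1) /\ s = rval l.

Lemma M0 : Mset 0.
Proof. by exists [::]; split => //; rewrite /rval big_nil. Qed.

Lemma MD s t : Mset s -> Mset t -> Mset (s + t).
Proof.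
move=> [l [hl ->]] [l' [hl' ->]]; exists (l ++ l'); split; last by rewrite /rval big_cat.
by move=> u; rewrite mem_cat => /orP [/hl|/hl'].
Qed.

Lemma Mterm a b r : R r -> Mset (mono a b * r).
Proof.
move=> hr; exists [:: (r, (a, b))]; split; first by move=> u; rewrite inE => /eqP ->.
by rewrite /rval big_cons big_nil addr0.
Qed.

Lemma Msum (I : Type) (l : seq I) (P : pred I) (F : I -> A) :
  (forall i, P i -> Mset (F i)) -> Mset (\sum_(i <- l | P i) F i).
Proof. by move=> h; apply: (big_ind Mset) => //; [exact: M0 | exact: MD]. Qed.

Lemma Mmul s y : Mset s -> (forall a b r, R r -> Mset (mono a b * r * y)) -> Mset (s * y).
Proof.
move=> [l [hl ->]] h; rewrite /rval mulr_suml.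
by rewrite big_seq; apply: Msum => t ht; apply: h; apply: hl.
Qed.

Lemma Rneg1 : R (-1). Proof. have := RN HR (R1 HR). by []. Qed.

Lemma MN s : Mset s -> Mset (- s).
Proof.
move=> hs; rewrite -mulrN1; apply: Mmul => // a b r hr.
rewrite -mulrA; apply: Mterm; exact (RM HR hr Rneg1).
Qed.

Lemma MB s t : Mset s -> Mset t -> Mset (s - t).
Proof. by move=> hs ht; apply: MD => //; apply: MN. Qed.

Lemma MmulR s r : Mset s -> R r -> Mset (s * r).
Proof.
move=> hs hr; apply: Mmul => // a b r' hr'.
rewrite -mulrA; apply: Mterm; exact (RM HR hr' hr).
Qed.

Lemma Mx2 s : Mset s -> Mset (s * x2).
Proof.
move=> hs; apply: Mmul => // a b r hr.
have [r' [hr' <-]] := Hsurj ord_max hr.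
rewrite -mulrA.
have -> : s1 r' * x2 = x2 * r' - d1 r' by rewrite x2r // addrK.
rewrite mulrBr mulrA; apply: MB; last by apply: Mterm; case: (Hsd ord_max hr').
have -> : mono a b * x2 = mono a b.+1 by rewrite /Defs.mono -mulrA -exprSr.
exact: Mterm.
Qed.

Lemma Mx1l s : Mset s -> Mset (x1 * s).
Proof.
move=> [l [hl ->]]; rewrite /rval mulr_sumr big_seq; apply: Msum => t ht.
rewrite mulrA; have -> : x1 * mono t.2.1 t.2.2 = mono t.2.1.+1 t.2.2.
  by rewrite /Defs.mono mulrA -exprS.
by apply: Mterm; apply: hl.
Qed.

Lemma Mx1pow n s : Mset s -> Mset (x1 ^+ n * s).
Proof. by move=> hs; elim: n => [|n IH]; rewrite ?expr0 ?mul1r // exprS -mulrA; apply: Mx1l. Qed.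

Variables (k : K) (t0 t1 t2 : A).
Hypotheses (Ht0 : R t0) (Ht1 : R t1) (Ht2 : R t2)
  (Hrel : x2 * x1 = k *: (x1 * x2) + t0 + t1 * x1 + t2 * x2).

Lemma Tlem j : Mset (x2 ^+ j * x1) -> forall a r, R r -> Mset (mono a j * r * x1).
Proof.
move=> hP a r hr.
have [r' [hr' <-]] := Hsurj ord0 hr.
rewrite -mulrA.
have -> : s0 r' * x1 = x1 * r' - d0 r' by rewrite x1r // addrK.
rewrite mulrBr mulrA; apply: MB; last by apply: Mterm; case: (Hsd ord0 hr').
apply: MmulR => //; rewrite /Defs.mono -mulrA; exact: Mx1pow.
Qed.

Lemma Pj j : Mset (x2 ^+ j * x1).
Proof.
elim: j => [|j IH].
  rewrite expr0 mul1r; have -> : x1 = mono 1 0 * 1 by rewrite /Defs.mono expr1 expr0 !mulr1.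
  exact: Mterm (R1 HR).
have em : x2 ^+ j = mono 0 j by rewrite /Defs.mono expr0 mul1r.
rewrite exprSr -mulrA Hrel !mulrDr; apply: MD; first apply: MD; first apply: MD.
- rewrite -scalerAr -mulr_algr !mulrA; apply: MmulR; last exact (RZ HR k (R1 HR)).
  exact: Mx2.
- by rewrite em; apply: Mterm.
- by rewrite mulrA em; apply: Tlem.
- by rewrite mulrA em; apply: Mx2; apply: Mterm.
Qed.

Lemma Mx1 s : Mset s -> Mset (s * x1).
Proof. move=> hs; apply: Mmul => // a b r hr; exact: Tlem (Pj b) a r hr. Qed.

Lemma Mall s : Mset s.
Proof.
case: HL => [h _]; case: (h s) => N [r [hr ->]].
apply: Msum => i _; apply: Msum => j _.
rewrite /Defs.mono mulrA.
have : Mset (r i j) by rewrite -[r i j]mul1r; have := Mterm 0 0 (hr i j); rewrite /Defs.mono !expr0 mulr1.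
move: (r i j) => u hu.
have hx : forall n v, Mset v -> Mset (v * x1 ^+ n).
  by move=> n v hv; elim: n => [|n IH]; rewrite ?expr0 ?mulr1 // exprSr mulrA; apply: Mx1.
have hy : forall n v, Mset v -> Mset (v * x2 ^+ n).
  by move=> n v hv; elim: n => [|n IH]; rewrite ?expr0 ?mulr1 // exprSr mulrA; apply: Mx2.
by apply: hy; apply: hx.
Qed.

Lemma RS_add N f g : RS N f + RS N g = RS N (fun i j => f i j + g i j).
Proof.
rewrite /RS -big_split; apply: eq_bigr => i _; rewrite -big_split.
by apply: eq_bigr => j _; rewrite mulrDr.
Qed.

Lemma rval_RS l N : (forall t, t \in l -> (t.2.1 < N)%N /\ (t.2.2 < N)%N) ->
  rval l = RS N (fun i j => \sum_(t <- l) (if (i == t.2.1) && (j == t.2.2) then t.1 else 0)).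
Proof.
elim: l => [|t l IH] h.
  rewrite /rval /RS big_nil big1 // => i _; rewrite big1 // => j _.
  by rewrite big_nil mulr0.
rewrite /rval big_cons -/(rval l) IH; last by move=> u hu; apply: h; rewrite in_cons hu orbT.
have [ha hb] := h t (mem_head _ _).
rewrite [RHS](_ : _ = RS N (fun i j => (if (i == t.2.1) && (j == t.2.2) then t.1 else 0) +
   \sum_(u <- l) (if (i == u.2.1) && (j == u.2.2) then u.1 else 0))); last first.
  by rewrite /RS; apply: eq_bigr => i _; apply: eq_bigr => j _; rewrite big_cons.
rewrite -RS_add; congr (_ + _).
rewrite /RS -(sum_delta2 (fun i j => mono i j * t.1) ha hb).
apply: eq_bigr => i _; apply: eq_bigr => j _.
by case: ifP => _; rewrite ?mulr0.
Qed.

Lemma list_bound (l : seq term) : exists N, forall t, t \in l -> (t.2.1 < N)%N /\ (t.2.2 < N)%N.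
Proof.
elim: l => [|t l [N hN]]; first by exists 0%N.
exists (maxn (maxn t.2.1 t.2.2).+1 N) => u; rewrite in_cons => /orP [/eqP ->|/hN [h1 h2]].
  split; rewrite leq_max; apply/orP; left; rewrite ltnS ?leq_maxl ?leq_maxr //.
split; rewrite leq_max; apply/orP; right => //.
Qed.

Lemma right_basis_ok : right_basis R x1 x2.
Proof.
split; last exact: right_uniq.
move=> s; have [l [hl e]] := Mall s; have [N hN] := list_bound l.
exists N, (fun i j => \sum_(t <- l) (if (i == t.2.1) && (j == t.2.2) then t.1 else 0)).
split; last by rewrite e (rval_RS hN).
move=> i j; rewrite big_seq; apply: (Rsum HR) => t ht.
by case: ifP => _; [apply: hl | apply: R0 HR].
Qed.


Lemma sig_sum i N (F : nat -> A) : (forall p, R (F p)) ->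
  sigma i (\sum_(p < N) F p) = \sum_(p < N) sigma i (F p).
Proof.
move=> hF; elim: N => [|N IH]; first by rewrite !big_ord0 sig0.
rewrite !big_ord_recr /= sigD ?IH //; exact: (Rsum HR).
Qed.

Lemma sig_graded_inv i m t u : GR m t -> R u -> sigma i u = t -> GR m u.
Proof.
move=> ht hu e.
have [_ [_ [_ [_ [Hdec Huniq]]]]] := HG.
have [N [f [hf eu]]] := Hdec u hu.
have hfR : forall p, R (f p) by move=> p; exact (GS HG (hf p)).
set M := maxn N m.+1.
set h := fun p => (if (p < N)%N then sigma i (f p) else 0) - (if p == m then t else 0).
have hG : forall p, GR p (h p).
  move=> p; apply: (GB HG).
    by case: ifP => _; [case: (Hgrd i (hf p)) | exact (G0 HG p)].
  by case: eqP => [->|_] //; exact (G0 HG p).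
have hs : \sum_(p < M) h p = 0.
  rewrite /h sumrB -!big_mkcond -(big_ord_widen M (fun p => sigma i (f p)) (leq_maxl _ _)).
  rewrite (big_ord1_eq _ (fun _ => t) m M) leq_maxr -sig_sum // -eu e subrr //.
have hz := Huniq M h hG hs.
have hf0 : forall p, (p < N)%N -> p <> m -> f p = 0.
  move=> p hp hpm; have := hz p (leq_trans hp (leq_maxl _ _)).
  rewrite /h hp; case: eqP => // _; rewrite subr0 => h0.
  by apply (Hinj (i:=i) (hfR p) (R0 HR)); rewrite h0 sig0.
rewrite eu; apply: (Gsum HG) => p _.
case: (eqVneq (p : nat) m) => [<-|ne] //; rewrite hf0 //; last exact/eqP.
exact (G0 HG m).
Qed.


Hypotheses (Hg0 : GR 2 t0) (Hg1 : GR 1 t1) (Hg2 : GR 1 t2) (Hk : k != 0)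
  (HGA : graded_by (fun _ => True) (pbw_piece GR x1 x2))
  (Hconn : forall a, pbw_piece GR x1 x2 0 a <-> exists k : K, a = k%:A)
  (H01 : GR 0 1).

Lemma main_inner : connected_graded_double_Ore R GR x1 x2.
Proof.
have rel4 : forall r s, R r -> R s -> exists a b c,
    [/\ R a, R b, R c & x1 * r + x2 * s = a * x1 + b * x2 + c].
  move=> r s hr hs; exists (s0 r), (s1 s), (d0 r + d1 s).
  case: (Hsd ord0 hr) => h1 h2 _; case: (Hsd ord_max hs) => h3 h4 _.
  split => //; first exact (RD HR h2 h4).
  by rewrite (x1r hr) (x2r hs) addrACA.
split.
- split => //.
  + have := piece_delta x1 x2 HG (m:=1) (a:=1) (b:=0) (leqnn 1) H01.
    by rewrite /Defs.mono expr1 expr0 !mulr1 mul1r.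
  + have := piece_delta x1 x2 HG (m:=1) (a:=0) (b:=1) (leqnn 1) H01.
    by rewrite /Defs.mono expr1 expr0 !mul1r.
  + move=> m r hr; have := piece_delta x1 x2 HG (m:=m) (a:=0) (b:=0) (leq0n m).
    by rewrite add0n subn0 /Defs.mono !expr0 !mulr1 => /(_ r hr); rewrite mulr1.
- move=> S HS hSR hx1 hx2 a.
  case: HL => [h _]; case: (h a) => N [r [hr ->]].
  apply: (Rsum HS) => i _; apply: (Rsum HS) => j _.
  exact (RM HS (hSR _ (hr i j)) (RM HS (RX HS i hx1) (RX HS j hx2))).
- split => //.
  exists k, 0, t0, t1, t2; split => //.
  rewrite Hrel scale0r addr0 -!addrA; congr (_ + _).
  by rewrite addrC -addrA.
- split => //; last exact: right_basis_ok.
  have [u [hu eu]] := Hsurj ord0 Ht1.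
  have [v [hv ev]] := Hsurj ord_max Ht2.
  have gu := sig_graded_inv Hg1 hu eu.
  have gv := sig_graded_inv Hg2 hv ev.
  exists k^-1, 0, ((- k^-1) *: (t0 - d0 u - d1 v)), ((- k^-1) *: u), ((- k^-1) *: v).
  split.
  + apply: (GZ HG); apply: (GB HG); first apply: (GB HG) => //.
      exact: (Hgrd ord0 gu).2.
    exact: (Hgrd ord_max gv).2.
  + exact: (GZ HG).
  + exact: (GZ HG).
  rewrite -[x1 * (_ *: u)]scalerAr -[x2 * (_ *: v)]scalerAr; apply: lin_id Hk _.
  by rewrite Hrel -eu -ev (x1r hu) (x2r hv) !addrK.
- move=> i m r hr; have hR := GS HG hr.
  case: i => [[|[|n]] hi] //.
    case: (Hsd (Ordinal hi) hR) => _ _ e.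
    exists (sigma (Ordinal hi) r), 0, (delta (Ordinal hi) r).
    split; [exact: (Hgrd _ hr).1 | exact (G0 HG m) | exact: (Hgrd _ hr).2 | ].
    by rewrite e /xv /= mul0r addr0.
  case: (Hsd (Ordinal hi) hR) => _ _ e.
  exists 0, (sigma (Ordinal hi) r), (delta (Ordinal hi) r).
  split; [exact (G0 HG m) | exact: (Hgrd _ hr).1 | exact: (Hgrd _ hr).2 | ].
  by rewrite e /xv /= mul0r add0r.
Qed.

End Main.

Theorem theorem3p2 (K : fieldType) (A : algType K) (R : A -> Prop)
    (GR : nat -> A -> Prop) (x1 x2 : A) :
  connected_graded_skew_PBW2 R GR x1 x2 -> connected_graded_double_Ore R GR x1 x2.
Proof.
move=> [[HR HG] HL [_ Hiv] [sigma [delta [Hsd Hinj Hsurj Hgrd]]] [HGA Hconn]].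
have H01 : GR 0 1.
  have [r [hr e]] : pbw_piece GR x1 x2 0 1 by apply/Hconn; exists 1; rewrite scale1r.
  rewrite big_ord1 big_mkcond big_ord1 /= /Defs.mono !expr0 !mulr1 in e.
  by rewrite e; exact: (hr 0%N 0%N isT).
have [c [hc0 hcnz _ [t0 [t1 [t2 [g0 g1 g2 e2]]]]]] := Hiv ord0 ord_max.
have [k ec] : exists k : K, c = k%:A.
  apply/Hconn; have := piece_delta x1 x2 HG (m:=0) (a:=0) (b:=0) (leqnn 0) hc0.
  by rewrite /Defs.mono !expr0 !mulr1.
have hk : k != 0 by apply/eqP => k0; apply: hcnz; rewrite ec k0 scale0r.
have Hrel : x2 * x1 = k *: (x1 * x2) + t0 + t1 * x1 + t2 * x2.
  move: e2; rewrite /xv /= ec -mulrA mulr_algl => /eqP; rewrite subr_eq => /eqP ->.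
  by rewrite addrC !addrA.
exact: (main_inner HR HG HL Hsd Hinj Hsurj Hgrd (GS HG g0) (GS HG g1) (GS HG g2) Hrel g0 g1 g2 hk HGA Hconn H01).
Qed.
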